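(* Let $\psi:\mathbb{N}\to(0,\infty)$ satisfy: (I) there exists $c>0$ such that for all $n\ge1$ and all integers $k\in[n,2n]$, $\psi(k)=\psi(n)\{1+O((\log n)^{-c})\}$; (II) there exists $\epsilon>0$ such that for all $n\ge1$, $\psi(2n)=\psi(n)\Big\{1-\frac{\log 2}{2\log n}+O\big((\log n)^{-1-\epsilon}\big)\Big\}$. Set $\delta=\min\{c,\epsilon\}$. Then there exists $a>0$ such that $$\psi(n)=a(\log n)^{-1/2}\Big\{1+O\big((\log n)^{-\delta}\big)\Big\}.$$ *)

(* Defs.v *)
From Stdlib Require Export Reals.
Open Scope R_scope.

(* lnpow n s = (log n)^s, used only for n >= 2 where log n > 0. *)
Definition lnpow (n : nat) (s : R) : R := Rpower (ln (INR n)) s.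

(* Main.v *)
Require Import Defs.
From Stdlib Require Import Reals Lra Lia Psatz ZArith.
Open Scope R_scope.

Lemma Rabs_le_between a b : Rabs a <= b -> - b <= a <= b.
Proof. unfold Rabs; destruct (Rcase_abs a); intros; lra. Qed.

Lemma exp_le' x y : x <= y -> exp x <= exp y.
Proof. intro H; destruct (Rle_lt_or_eq _ _ H) as [H1|H1]; [left; apply exp_increasing; lra | subst; lra]. Qed.

Lemma ln_le' x y : 0 < x -> x <= y -> ln x <= ln y.
Proof. intros H0 H; destruct (Rle_lt_or_eq _ _ H) as [H1|H1]; [left; apply ln_increasing; lra | subst; lra]. Qed.

Lemma ln_le_sub1 y : 0 < y -> ln y <= y - 1.
Proof. intro H. pose proof (exp_ineq1_le (ln y)) as H0. rewrite exp_ln in H0 by exact H. lra. Qed.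

Lemma ln_ge_1_inv y : 0 < y -> 1 - / y <= ln y.
Proof. intro H. pose proof (ln_le_sub1 (/ y) (Rinv_0_lt_compat _ H)) as H0.
  rewrite ln_Rinv in H0 by exact H. lra. Qed.

Lemma abs_ln_le r : Rabs (r - 1) <= /2 -> Rabs (ln r) <= 2 * Rabs (r - 1).
Proof.
  intro H. assert (Hr : /2 <= r <= 3/2) by (apply Rabs_le_between in H; lra).
  assert (Hp : 0 < r) by lra.
  pose proof (ln_le_sub1 r Hp). pose proof (ln_ge_1_inv r Hp).
  assert (Hv : r * / r = 1) by (field; lra).
  assert (0 < / r) by (apply Rinv_0_lt_compat; lra).
  apply Rabs_le. destruct (Rle_or_lt 1 r).
  - rewrite Rabs_right by lra. split; [|lra].
    assert (/ r <= 1). { nra. } lra.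
  - rewrite Rabs_left by lra. split; [|lra].
    assert (/ r - 1 <= 2 * (1 - r)) by nra. lra.
Qed.

Lemma exp_sub1_le t K : Rabs t <= K -> Rabs (exp t - 1) <= exp K * Rabs t.
Proof.
  intro H. assert (HK: 0 <= K) by (pose proof (Rabs_pos t); lra).
  apply Rabs_le_between in H.
  assert (1 <= exp K) by (pose proof (exp_ineq1_le K); lra).
  destruct (Rle_or_lt 0 t).
  - assert (1 <= exp t) by (pose proof (exp_ineq1_le t); lra).
    rewrite (Rabs_right (exp t - 1)) by lra. rewrite (Rabs_right t) by lra.
    pose proof (exp_ineq1_le (- t)) as H3. rewrite exp_Ropp in H3.
    assert (Het: 0 < exp t) by apply exp_pos.
    assert (exp t * / exp t = 1) by (field; lra).
    assert (exp t - 1 <= t * exp t) by nra.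
    pose proof (exp_le' _ _ (proj2 H)). nra.
  - assert (exp t <= 1) by (pose proof (exp_le' t 0 ltac:(lra)); rewrite exp_0 in *; lra).
    rewrite (Rabs_left1 (exp t - 1)) by lra. rewrite (Rabs_left t) by lra.
    pose proof (exp_ineq1_le t). nra.
Qed.

Lemma sqrt_part x s : 0 <= x <= 1 -> 0 < s -> s * s = 1 + x ->
  Rabs ((1 - x/2) * s - 1) <= x * x.
Proof.
  intros Hx Hs Hss. set (u := (1 - x/2) * s).
  assert (Hu0 : 0 <= u) by (unfold u; nra).
  assert (Huu : u * u = (1 - x/2) * (1 - x/2) * (1 + x)) by (unfold u; nra).
  assert (u * u <= 1) by nra.
  assert (u <= 1) by nra.
  assert ((1 - x*x) * (1 - x*x) <= u * u).
  { rewrite Huu. assert (0 <= x*x*(5/4 + x/4 - x*x)).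
    { apply Rmult_le_pos; nra. } nra. }
  assert (1 - x*x <= u) by nra.
  apply Rabs_le; lra.
Qed.

Lemma potential x d : 0 < x <= 1 -> 0 < d <= 1 ->
  d * x / 4 <= 1 - exp (- (d * ln (1 + x))).
Proof.
  intros Hx Hd. pose proof (ln_le_sub1 (1+x) ltac:(lra)).
  pose proof (ln_ge_1_inv (1+x) ltac:(lra)).
  assert (/ (1 + x) <= 1 - x/2).
  { assert ((1+x) * / (1+x) = 1) by (field; lra).
    assert (0 < /(1+x)) by (apply Rinv_0_lt_compat; lra). nra. }
  set (y := d * ln (1 + x)).
  assert (Hy1 : d * x / 2 <= y) by (unfold y; nra).
  assert (Hy2 : y <= 1) by (unfold y; nra).
  rewrite exp_Ropp. pose proof (exp_ineq1_le y).
  assert (0 < exp y) by apply exp_pos.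
  assert (exp y * / exp y = 1) by (field; lra).
  assert (0 < / exp y) by (apply Rinv_0_lt_compat; lra).
  assert (/ exp y * (1 + y) <= 1) by nra.
  assert (0 <= y) by nra.
  destruct (Rle_or_lt (/2) (/ exp y)); nra.
Qed.

Lemma nat_ge y : exists N : nat, y <= INR N.
Proof.
  destruct (archimed y) as [H1 _].
  destruct (Z_le_gt_dec 0 (up y)) as [H|H].
  - exists (Z.to_nat (up y)). rewrite INR_IZR_INZ, Z2Nat.id by exact H. lra.
  - exists 0%nat. simpl. apply Z.gt_lt in H. apply IZR_lt in H. lra.
Qed.

Lemma sum_ge_term g N i : (forall k, 0 <= g k) -> (i <= N)%nat -> g i <= sum_f_R0 g N.
Proof.
  intros Hg Hi. induction N.
  - replace i with 0%nat by lia. simpl. lra.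
  - destruct (Nat.eq_dec i (S N)) as [->|Hne].
    + simpl. pose proof (cond_pos_sum g N Hg). lra.
    + simpl. pose proof (Hg (S N)). specialize (IHN ltac:(lia)). lra.
Qed.

Lemma pow2_ge1 j : (1 <= 2 ^ j)%nat.
Proof. induction j; simpl; lia. Qed.

Lemma cover n m : (1 <= n)%nat -> (n <= m)%nat ->
  exists j, (2 ^ j * n <= m <= 2 * (2 ^ j * n))%nat.
Proof.
  intros Hn Hm.
  assert (Hgen : forall j, (m <= 2 ^ j * n)%nat -> exists i, (2 ^ i * n <= m <= 2 * (2 ^ i * n))%nat).
  { induction j as [|j IH]; intro Hj.
    - exists 0%nat. simpl in *. lia.
    - destruct (Nat.le_gt_cases m (2 ^ j * n)) as [H|H].
      + apply IH, H.
      + exists j. rewrite Nat.pow_succ_r' in Hj. lia. }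
  apply (Hgen m). pose proof (Nat.pow_gt_lin_r 2 m ltac:(lia)). nia.
Qed.

Definition lam (n : nat) : R := ln (ln (INR n)).
Definition ff (psi : nat -> R) (n : nat) : R := ln (psi n) + / 2 * lam n.
Definition ee (d : R) (n : nat) : R := exp (- d * lam n).

Lemma lam_large T : exists N, forall n, (N <= n)%nat -> exp T <= ln (INR n) /\ T <= lam n.
Proof.
  destruct (nat_ge (exp (exp T))) as [N HN]. exists N. intros n Hn.
  apply le_INR in Hn. pose proof (exp_pos (exp T)).
  assert (H1 : exp T <= ln (INR n)).
  { rewrite <- (ln_exp (exp T)) at 1. apply ln_le'; lra. }
  split; [exact H1|]. unfold lam. pose proof (exp_pos T).
  rewrite <- (ln_exp T) at 1. apply ln_le'; lra.
Qed.

Lemma small s eta : 0 < s -> 0 < eta -> exists N, forall n, (N <= n)%nat -> exp (- s * lam n) <= eta.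
Proof.
  intros Hs He. destruct (lam_large (- ln eta / s)) as [N HN]. exists N. intros n Hn.
  destruct (HN n Hn) as [_ H2]. rewrite <- (exp_ln eta) by lra. apply exp_le'.
  assert (s * (- ln eta / s) = - ln eta) by (field; lra). nra.
Qed.

Lemma ln2_bounds : 0 < ln 2 < 1.
Proof.
  split. pose proof ln_lt_2; lra.
  rewrite <- (ln_exp 1). apply ln_increasing; [lra|].
  pose proof (exp_ineq1 1 ltac:(lra)); lra.
Qed.

Lemma posdiv a b : 0 < a -> 0 <= b -> 0 < a / (b + 1).
Proof. intros; apply Rdiv_lt_0_compat; lra. Qed.

Lemma absmul_le C Z eta : 0 <= Z -> Z <= eta / (Rabs C + 1) -> Rabs C * Z <= eta.
Proof.
  intros HZ H. pose proof (Rabs_pos C).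
  assert (Z * (Rabs C + 1) <= eta).
  { apply (Rmult_le_compat_r (Rabs C + 1)) in H; [|lra].
    replace (eta / (Rabs C + 1) * (Rabs C + 1)) with eta in H by (field; lra). exact H. }
  nra.
Qed.

Lemma C_le_abs C Z : 0 <= Z -> C * Z <= Rabs C * Z.
Proof. intros. pose proof (Rle_abs C). nra. Qed.

Theorem lemma3p1 (psi : nat -> R) (c eps : R)
  (Hpos : forall n : nat, (1 <= n)%nat -> 0 < psi n)
  (Hc : 0 < c) (Heps : 0 < eps)
  (HI : exists (C : R) (N : nat), forall n k : nat,
      (N <= n)%nat -> (2 <= n)%nat -> (n <= k)%nat -> (k <= 2 * n)%nat ->
      Rabs (psi k / psi n - 1) <= C * lnpow n (- c))
  (HII : exists (C : R) (N : nat), forall n : nat,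
      (N <= n)%nat -> (2 <= n)%nat ->
      Rabs (psi (2 * n)%nat / psi n - (1 - ln 2 / (2 * ln (INR n))))
        <= C * lnpow n (- 1 - eps)) :
  exists a : R, 0 < a /\
    exists C : R, forall n : nat, (2 <= n)%nat ->
      Rabs (psi n / (a * lnpow n (- (1/2))) - 1) <= C * lnpow n (- Rmin c eps).
Proof.
  destruct HI as [C1 [N1 HI]]. destruct HII as [C2 [N2 HII]].
  pose proof ln2_bounds as Hl. set (l := ln 2) in *.
  destruct (lam_large 0) as [N3 HN3]. rewrite exp_0 in HN3.
  pose proof (Rabs_pos C1) as HC1. pose proof (Rabs_pos C2) as HC2.
  destruct (Rle_or_lt c 1) as [Hc1|Hc1].
  2:{ exfalso.
    destruct (small (c-1) (l/8/(Rabs C1 + 1)) ltac:(lra) (posdiv (l/8) _ ltac:(lra) HC1)) as [N4 HN4].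
    destruct (small eps (l/8/(Rabs C2 + 1)) Heps (posdiv (l/8) _ ltac:(lra) HC2)) as [N5 HN5].
    set (n := (N1 + N2 + N3 + N4 + N5 + 2)%nat).
    specialize (HI n (2 * n)%nat ltac:(unfold n; lia) ltac:(unfold n; lia) ltac:(lia) ltac:(lia)).
    specialize (HII n ltac:(unfold n; lia) ltac:(unfold n; lia)).
    specialize (HN4 n ltac:(unfold n; lia)). specialize (HN5 n ltac:(unfold n; lia)).
    destruct (HN3 n ltac:(unfold n; lia)) as [HL1 Hlam0].
    unfold lnpow, Rpower in HI, HII. fold (lam n) in HI, HII.
    assert (HL : ln (INR n) = exp (lam n)) by (unfold lam; rewrite exp_ln; lra).
    set (E := exp (- lam n)).
    assert (HE : 0 < E) by apply exp_pos.
    assert (Hx : l / (2 * ln (INR n)) = l * E / 2).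
    { rewrite HL. unfold E. rewrite exp_Ropp. field. apply Rgt_not_eq, exp_pos. }
    rewrite Hx in HII.
    assert (H1 : exp (- c * lam n) = E * exp (- (c - 1) * lam n)).
    { unfold E. rewrite <- exp_plus. f_equal. ring. }
    assert (H2 : exp ((- 1 - eps) * lam n) = E * exp (- eps * lam n)).
    { unfold E. rewrite <- exp_plus. f_equal. ring. }
    rewrite H1 in HI. rewrite H2 in HII.
    pose proof (exp_pos (- (c - 1) * lam n)). pose proof (exp_pos (- eps * lam n)).
    pose proof (absmul_le C1 (exp (- (c - 1) * lam n)) _ ltac:(lra) HN4).
    pose proof (absmul_le C2 (exp (- eps * lam n)) _ ltac:(lra) HN5).
    pose proof (C_le_abs C1 (E * exp (- (c - 1) * lam n)) ltac:(nra)).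
    pose proof (C_le_abs C2 (E * exp (- eps * lam n)) ltac:(nra)).
    apply Rabs_le_between in HI. apply Rabs_le_between in HII.
    nra. }
  set (d := Rmin c eps).
  assert (Hd : 0 < d <= 1 /\ d <= c /\ d <= eps)
    by (unfold d, Rmin; destruct (Rle_dec c eps); lra).
  destruct Hd as [Hd [Hdc Hde]].
  set (K1 := l * l + 2 * Rabs C2).
  assert (HK1 : 0 <= K1) by (unfold K1; nra).
  set (M := 8 * K1 / (d * l)).
  assert (HM : 0 <= M) by (unfold M; apply Rmult_le_pos; [lra| left; apply Rinv_0_lt_compat; nra]).
  set (K2 := 2 * Rabs C1 + l / 2).
  assert (HK2 : 0 <= K2) by (unfold K2; lra).
  set (K := K2 + M).
  destruct (small c (/2/(Rabs C1 + 1)) Hc (posdiv (/2) _ ltac:(lra) HC1)) as [N6 HN6].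
  destruct (small (1 + d) (/2/(K1 + 1)) ltac:(lra) (posdiv (/2) _ ltac:(lra) HK1)) as [N7 HN7].
  set (N0 := (N1 + N2 + N3 + N6 + N7 + 2)%nat).
  assert (NF : forall n, (N0 <= n)%nat ->
    (2 <= n)%nat /\ 1 <= ln (INR n) /\ 0 <= lam n /\ ln (INR n) = exp (lam n) /\ 0 < INR n
    /\ 0 < psi n).
  { intros n Hn. destruct (HN3 n ltac:(unfold N0 in *; lia)) as [HL1 Hlam0].
    repeat split; try lia; try lra.
    - unfold lam; rewrite exp_ln; lra.
    - apply lt_0_INR. unfold N0 in *; lia.
    - apply Hpos. unfold N0 in *; lia. }
  assert (Hee : forall n, 0 < ee d n) by (intro; apply exp_pos).
  assert (HA : forall n, (N0 <= n)%nat ->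
    Rabs (ff psi (2 * n) - ff psi n) <= M * (ee d n - ee d (2 * n)) /\ 0 <= ee d n - ee d (2 * n)).
  { intros n Hn. destruct (NF n Hn) as (Hn2 & HL1 & Hlam0 & HL & HINR & Hpsin).
    assert (Hpsi2 : 0 < psi (2 * n)%nat) by (apply Hpos; lia).
    set (L := ln (INR n)) in *. set (la := lam n) in *.
    set (x := l * exp (- la)).
    assert (Hel : exp (- la) <= 1) by (rewrite <- exp_0; apply exp_le'; lra).
    assert (Hx : 0 < x <= 1) by (unfold x; pose proof (exp_pos (- la)); split; nra).
    assert (HLx : L * exp (- la) = 1) by (rewrite HL, exp_Ropp; field; apply Rgt_not_eq, exp_pos).
    assert (HL2 : ln (INR (2 * n)) = L * (1 + x)).
    { rewrite mult_INR. simpl (INR 2). replace (1 + 1) with 2 by ring.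
      rewrite ln_mult by lra. unfold x. fold l L. nra. }
    assert (Hlam2 : lam (2 * n) = la + ln (1 + x)).
    { unfold lam at 1. rewrite HL2, ln_mult by lra. unfold la, lam. fold L. reflexivity. }
    assert (Hee2 : ee d (2 * n) = ee d n * exp (- (d * ln (1 + x)))).
    { unfold ee. rewrite Hlam2, <- exp_plus. f_equal. fold la. ring. }
    pose proof (potential x d Hx Hd) as Hpot.
    set (F := exp ((- 1 - d) * la)).
    assert (HF : 0 < F) by apply exp_pos.
    assert (HeexF : ee d n * x = l * F).
    { unfold ee, x, F. fold la. rewrite Rmult_comm, Rmult_assoc, <- exp_plus. f_equal. f_equal. ring. }
    assert (Hdiff : d * l * F / 4 <= ee d n - ee d (2 * n)).
    { rewrite Hee2. pose proof (Hee n). nra. }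
    assert (HdlF : 0 < d * l * F) by (apply Rmult_lt_0_compat; [apply Rmult_lt_0_compat|]; lra).
    split; [| lra].
    set (r := psi (2 * n)%nat / psi n).
    assert (Hr : 0 < r) by (unfold r; apply Rdiv_lt_0_compat; lra).
    set (s := exp (/ 2 * ln (1 + x))).
    assert (Hs : 0 < s) by apply exp_pos.
    assert (Hss : s * s = 1 + x).
    { unfold s. rewrite <- exp_plus. replace (/ 2 * ln (1 + x) + / 2 * ln (1 + x)) with (ln (1 + x)) by field.
      apply exp_ln; lra. }
    assert (Hff : ff psi (2 * n) - ff psi n = ln (r * s)).
    { unfold ff. rewrite Hlam2. unfold r, s. rewrite ln_mult, ln_exp by (try apply Rdiv_lt_0_compat; try apply exp_pos; lra).
      unfold Rdiv. rewrite ln_mult, ln_Rinv by (try apply Rinv_0_lt_compat; lra). fold la. ring. }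
    rewrite Hff.
    specialize (HII n ltac:(unfold N0 in *; lia) Hn2). unfold lnpow, Rpower in HII. fold L in HII.
    change (ln L) with la in HII. fold r in HII.
    assert (Hlx : l / (2 * L) = x / 2) by (assert (Hinv : exp (- la) = / L) by (apply (Rmult_eq_reg_l L); [rewrite HLx; field|]; lra); unfold x; rewrite Hinv; field; lra).
    rewrite Hlx in HII.
    assert (HFe : exp ((- 1 - eps) * la) <= F) by (unfold F; apply exp_le'; nra).
    pose proof (C_le_abs C2 (exp ((- 1 - eps) * la)) ltac:(left; apply exp_pos)).
    set (e1 := r - (1 - x / 2)) in *.
    assert (He1 : Rabs e1 <= Rabs C2 * F) by nra.
    pose proof (sqrt_part x s ltac:(lra) Hs Hss) as Hsp.
    assert (Hs2 : s <= 2) by nra.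
    assert (Hxx : x * x <= l * l * F).
    { unfold x, F. replace (l * exp (- la) * (l * exp (- la))) with (l * l * exp (- la + - la)) by (rewrite exp_plus; ring).
      apply Rmult_le_compat_l; [nra|]. apply exp_le'. nra. }
    assert (Hrs : Rabs (r * s - 1) <= K1 * F).
    { replace (r * s - 1) with (((1 - x / 2) * s - 1) + e1 * s) by (unfold e1; ring).
      eapply Rle_trans; [apply Rabs_triang|]. rewrite Rabs_mult, (Rabs_right s) by lra.
      unfold K1. pose proof (Rabs_pos e1). nra. }
    assert (HKF : K1 * F <= / 2).
    { specialize (HN7 n ltac:(unfold N0 in *; lia)).
      replace (- (1 + d) * lam n) with ((- 1 - d) * la) in HN7 by (unfold la; ring). fold F in HN7.
      pose proof (absmul_le K1 F (/2) ltac:(lra)). rewrite Rabs_right in H0 by lra. apply H0, HN7. }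
    pose proof (abs_ln_le (r * s) ltac:(lra)).
    assert (HMd : M * (d * l) = 8 * K1) by (unfold M; field; lra).
    nra. }
  assert (HB : forall n k, (N0 <= n)%nat -> (n <= k)%nat -> (k <= 2 * n)%nat ->
    Rabs (ff psi k - ff psi n) <= K2 * ee d n).
  { intros n k Hn Hk1 Hk2. destruct (NF n Hn) as (Hn2 & HL1 & Hlam0 & HL & HINR & Hpsin).
    assert (Hpsik : 0 < psi k) by (apply Hpos; lia).
    apply le_INR in Hk1. apply le_INR in Hk2. rewrite mult_INR in Hk2. simpl (INR 2) in Hk2.
    set (L := ln (INR n)) in *. set (la := lam n) in *.
    set (Lk := ln (INR k)).
    assert (HLk1 : L <= Lk) by (apply ln_le'; lra).
    assert (HLk2 : Lk <= l + L).
    { unfold l, L. rewrite <- ln_mult by lra. apply ln_le'; lra. }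
    assert (Hinv : exp (- la) = / L) by (rewrite exp_Ropp, HL; reflexivity).
    assert (Hlk : 0 <= lam k - la <= l * exp (- la)).
    { assert (E1 : lam k = ln Lk) by reflexivity. assert (E2 : la = ln L) by reflexivity.
      rewrite E1. rewrite E2 at 1.
      split. pose proof (ln_le' L Lk ltac:(lra) HLk1). lra.
      replace (ln Lk - la) with (ln (Lk * / L)) by (rewrite ln_mult, ln_Rinv, E2; try apply Rinv_0_lt_compat; lra).
      eapply Rle_trans. apply ln_le_sub1. apply Rmult_lt_0_compat; [lra|apply Rinv_0_lt_compat; lra].
      rewrite Hinv. assert (L * / L = 1) by (field; lra).
      assert (0 < / L) by (apply Rinv_0_lt_compat; lra). nra. }
    assert (Hed : exp (- la) <= ee d n) by (unfold ee; apply exp_le'; fold la; nra).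
    assert (Hec : exp (- c * la) <= ee d n) by (unfold ee; apply exp_le'; fold la; nra).
    specialize (HI n k ltac:(unfold N0 in *; lia) Hn2 ltac:(apply INR_le; lra) ltac:(apply INR_le; rewrite mult_INR; simpl; lra)).
    unfold lnpow, Rpower in HI. fold L in HI. change (ln L) with la in HI.
    pose proof (C_le_abs C1 (exp (- c * la)) ltac:(left; apply exp_pos)).
    specialize (HN6 n ltac:(unfold N0 in *; lia)). fold la in HN6.
    pose proof (absmul_le C1 _ _ ltac:(left; apply exp_pos) HN6).
    pose proof (abs_ln_le (psi k / psi n) ltac:(lra)) as Hln.
    assert (Hffk : ff psi k - ff psi n = ln (psi k / psi n) + / 2 * (lam k - la)).
    { unfold ff, Rdiv. rewrite ln_mult, ln_Rinv by (try apply Rinv_0_lt_compat; lra). fold la. ring. }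
    rewrite Hffk. eapply Rle_trans; [apply Rabs_triang|].
    rewrite Rabs_mult, (Rabs_right (/2)) by lra. rewrite (Rabs_right (lam k - la)) by lra.
    unfold K2. pose proof (Hee n). nra. }
  assert (HT : forall n, (N0 <= n)%nat -> forall j,
    Rabs (ff psi (2 ^ j * n) - ff psi n) <= M * (ee d n - ee d (2 ^ j * n)) /\ ee d (2 ^ j * n) <= ee d n).
  { intros n Hn j. induction j as [|j [IH1 IH2]].
    - simpl (2 ^ 0)%nat. rewrite Nat.mul_1_l. unfold Rminus. rewrite Rplus_opp_r, Rabs_R0. lra.
    - replace (2 ^ S j * n)%nat with (2 * (2 ^ j * n))%nat by (rewrite Nat.pow_succ_r'; lia).
      pose proof (pow2_ge1 j).
      destruct (HA (2 ^ j * n)%nat ltac:(nia)) as [HA1 HA2].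
      split; [|lra].
      replace (ff psi (2 * (2 ^ j * n)) - ff psi n) with
        ((ff psi (2 * (2 ^ j * n)) - ff psi (2 ^ j * n)) + (ff psi (2 ^ j * n) - ff psi n)) by ring.
      eapply Rle_trans; [apply Rabs_triang|]. lra. }
  assert (HD : forall n m, (N0 <= n)%nat -> (n <= m)%nat -> Rabs (ff psi m - ff psi n) <= K * ee d n).
  { intros n m Hn Hm. destruct (cover n m ltac:(unfold N0 in *; lia) Hm) as [j Hj].
    pose proof (pow2_ge1 j).
    destruct (HT n Hn j) as [HT1 HT2].
    pose proof (HB (2 ^ j * n)%nat m ltac:(nia) ltac:(lia) ltac:(lia)) as HB1.
    replace (ff psi m - ff psi n) with ((ff psi m - ff psi (2 ^ j * n)) + (ff psi (2 ^ j * n) - ff psi n)) by ring.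
    eapply Rle_trans; [apply Rabs_triang|]. unfold K.
    pose proof (Hee (2 ^ j * n)%nat). nra. }
  set (Es := fun y => exists n, (N0 <= n)%nat /\ y = ff psi n - K * ee d n).
  assert (HK : 0 <= K) by (unfold K; lra).
  destruct (completeness Es) as [al [Hub Hlub]].
  { exists (ff psi N0 + K * ee d N0). intros y [n [Hn ->]].
    pose proof (HD N0 n ltac:(lia) Hn). apply Rabs_le_between in H. pose proof (Hee n). nra. }
  { exists (ff psi N0 - K * ee d N0). exists N0. split; [lia|reflexivity]. }
  assert (Hal : forall n, (N0 <= n)%nat -> Rabs (ff psi n - al) <= K * ee d n).
  { intros n Hn. apply Rabs_le. split.
    - assert (al <= ff psi n + K * ee d n).
      { apply Hlub. intros y [m [Hm ->]]. pose proof (Hee m).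
        destruct (Nat.le_gt_cases n m) as [Hnm|Hnm].
        - pose proof (HD n m Hn Hnm). apply Rabs_le_between in H0. nra.
        - pose proof (HD m n Hm ltac:(lia)). apply Rabs_le_between in H0. pose proof (Hee n). nra. }
      lra.
    - assert (ff psi n - K * ee d n <= al) by (apply Hub; exists n; split; [exact Hn|reflexivity]).
      lra. }
  exists (exp al). split; [apply exp_pos|].
  set (g := fun i => Rabs (exp (ff psi i - al) - 1) / ee d i).
  assert (Hg : forall i, 0 <= g i).
  { intro i. unfold g. apply Rmult_le_pos; [apply Rabs_pos| left; apply Rinv_0_lt_compat, Hee]. }
  pose proof (cond_pos_sum g N0 Hg) as Hsum.
  exists (exp K * K + sum_f_R0 g N0).
  intros n Hn2.
  assert (Hpn : 0 < psi n) by (apply Hpos; lia).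
  assert (Heq : psi n / (exp al * lnpow n (- (1/2))) = exp (ff psi n - al)).
  { unfold lnpow, Rpower, ff. fold (lam n).
    replace (ln (psi n) + / 2 * lam n - al) with (ln (psi n) + (- al + - (- (1/2) * lam n))) by field.
    rewrite exp_plus, exp_plus, !exp_Ropp, exp_ln by lra. field.
    split; apply Rgt_not_eq, exp_pos. }
  rewrite Heq. change (lnpow n (- d)) with (ee d n).
  pose proof (Hee n) as Hen.
  destruct (Nat.le_gt_cases N0 n) as [Hn|Hn].
  - pose proof (Hal n Hn) as Haln.
    assert (Hle1 : ee d n <= 1).
    { unfold ee. rewrite <- exp_0. apply exp_le'. destruct (NF n Hn) as (_&_&?&_). nra. }
    pose proof (exp_sub1_le (ff psi n - al) K ltac:(nra)) as Hs1.
    pose proof (exp_pos K).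
    assert (exp K * Rabs (ff psi n - al) <= exp K * (K * ee d n)) by (apply Rmult_le_compat_l; lra).
    assert (0 <= sum_f_R0 g N0 * ee d n) by nra.
    replace ((exp K * K + sum_f_R0 g N0) * ee d n) with (exp K * (K * ee d n) + sum_f_R0 g N0 * ee d n) by ring.
    lra.
  - pose proof (sum_ge_term g N0 n Hg ltac:(lia)) as Hgn.
    assert (Hgeq : Rabs (exp (ff psi n - al) - 1) = g n * ee d n) by (unfold g; field; lra).
    rewrite Hgeq. pose proof (exp_pos K).
    assert (0 <= exp K * K * ee d n) by (apply Rmult_le_pos; [apply Rmult_le_pos|]; lra).
    assert (g n * ee d n <= sum_f_R0 g N0 * ee d n) by (apply Rmult_le_compat_r; lra).
    replace ((exp K * K + sum_f_R0 g N0) * ee d n) with (exp K * K * ee d n + sum_f_R0 g N0 * ee d n) by ring.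
    lra.
Qed.
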